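(* With the notation of the context, let $N\ge2$ and $Q^o(\alpha_i)=\theta/(N+i-1)$, $1\le i\le N$, where $\theta>0$ is chosen so that $\sum_iQ^o(\alpha_i)=1$. Then $Q^o(\alpha_i)<Q^*(\alpha_i)+\frac{\lg e}{2N^2}$ for all $i$, and $L(Q^o)<H(p)+D(p\|q)+\frac{\lg e}{2N}$.
   Context: Let $\mathcal S$ be a finite alphabet with $|\mathcal S|\ge2$, $p$ a probability distribution on $\mathcal S$ with $p(s)>0$, $N_s$ ($s\in\mathcal S$) positive integers, $N=\sum_sN_s$, $q(s)=N_s/N$, $\lg=\log_2$, and $\kappa_s=\lceil\lg(N/N_s)\rceil$ (so $\kappa_s\ge1$ and $N\le 2^{\kappa_s}N_s<2N$). Let $\alpha_1,\dots,\alpha_N$ be the states. For a probability distribution $Q$ on $\{\alpha_1,\dots,\alpha_N\}$ define $L(Q)=\sum_s p(s)\sum_{i=1}^N Q(\alpha_i)\ell_s(i)$, where $\ell_s(i)=\kappa_s-1$ if $i\le 2^{\kappa_s}N_s-N$ and $\ell_s(i)=\kappa_s$ otherwise. (This is the average code length of the Yokoo–Dubé-type sAEDS, whose state $\alpha_i$ encodes $s$ with $\ell_s(i)$ bits, when $Q$ is its stationary distribution with states indexed in non-increasing order of $Q$.) $Q^*(\alpha_i)=\lg\frac{N+i}{N+i-1}$, which sums to 1. $H(p)=-\sum p\lg p$, $D(p\|q)=\sum p\lg(p/q)$. *)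

(* Defs.v *)
From HB Require Import structures.
From mathcomp Require Import all_boot all_order all_algebra.
From mathcomp Require Import all_classical all_reals all_analysis.
Set Implicit Arguments. Unset Strict Implicit. Unset Printing Implicit Defensive.
Import Order.TTheory GRing.Theory Num.Theory.
Local Open Scope ring_scope.

Section Defs.
Variables (R : realType) (S : finType).

Definition lg (x : R) : R := ln x / ln 2.

Definition Ntot (Ns : S -> nat) : nat := (\sum_(s : S) Ns s)%N.

Definition qdist (Ns : S -> nat) (s : S) : R := (Ns s)%:R / (Ntot Ns)%:R.

(* kappa_s = ceil(lg(N / N_s)) (nonnegative, so taken as a nat) *)
Definition kappa (Ns : S -> nat) (s : S) : nat :=
  `| Num.ceil (lg ((Ntot Ns)%:R / (Ns s)%:R)) |%N.

Definition ell (Ns : S -> nat) (s : S) (i : nat) : nat :=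
  if (i <= 2 ^ kappa Ns s * Ns s - Ntot Ns)%N then (kappa Ns s).-1 else kappa Ns s.

Definition avg_len (p : S -> R) (Ns : S -> nat) (Q : nat -> R) : R :=
  \sum_(s : S) p s * \sum_(1 <= i < (Ntot Ns).+1) Q i * (ell Ns s i)%:R.

Definition Qstar (N : nat) (i : nat) : R := lg ((N + i)%:R / (N + i - 1)%:R).

Definition theta (N : nat) : R := (\sum_(1 <= i < N.+1) ((N + i - 1)%:R)^-1)^-1.
Definition Qo (N : nat) (i : nat) : R := theta N / (N + i - 1)%:R.

Definition entropy (p : S -> R) : R := - \sum_(s : S) p s * lg (p s).
Definition relent (p q : S -> R) : R := \sum_(s : S) p s * lg (p s / q s).

End Defs.

(* Main.v *)
Require Import Defs.
From HB Require Import structures.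
From mathcomp Require Import all_boot all_order all_algebra.
From mathcomp Require Import all_classical all_reals all_analysis.
From mathcomp Require Import ring lra zify.
Import Order.TTheory GRing.Theory Num.Theory.
Local Open Scope ring_scope.

Section L.
Variable R : realType.

Lemma ln_lt_x (x : R) : 0 < x -> ln (1 + x) < x.
Proof.
move=> x0.
have h1 : 1 + x = (1 + x / 2) * (1 + (x / 2) / (1 + x / 2)).
  by field; lra.
have p1 : 0 < 1 + x / 2 by lra.
have d : 0 < x / 2 / (1 + x / 2) by rewrite divr_gt0 //; lra.
have p2 : 0 < 1 + (x / 2) / (1 + x / 2) by lra.
rewrite h1 lnM ?posrE //.
have a := le_ln1Dx (_ : -1 < x / 2).
have b := le_ln1Dx (_ : -1 < (x / 2) / (1 + x / 2)).
have c : (x / 2) / (1 + x / 2) < x / 2.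
  by rewrite ltr_pdivrMr // ltr_pMr; lra.
have := a ltac:(lra); have := b ltac:(lra); lra.
Qed.

Lemma ln_ge_1V (y : R) : 0 < y -> 1 - y^-1 <= ln y.
Proof.
move=> y0; have := le_ln1Dx (_ : -1 < y^-1 - 1).
have -> : 1 + (y^-1 - 1) = y^-1 by ring.
rewrite lnV ?posrE // => h.
have : - ln y <= y^-1 - 1 by apply: h; have := invr_gt0 y; rewrite y0; lra.
lra.
Qed.

Definition hh (x : R) := (x + 1) * ln x - 2 * (x - 1).

Lemma hh_der (x : R) : 0 < x -> is_derive x 1 hh (ln x + (x + 1) / x - 2).
Proof.
move=> x0.
pose f : R -> R := fun y => y + 1.
pose g : R -> R := fun y => 2 * (y - 1).
have e : hh = (f * @ln R) - g.
  by apply/funext => y.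
rewrite e; apply: is_derive_eq.
  apply: is_deriveB; first apply: is_deriveM.
  exact: is_derive1_ln x0.
rewrite /f /= -![_ *: _]/(_ * _).
field; lra.
Qed.

Lemma ln_lb (u : R) : 1 <= u -> 2 * (u - 1) / (u + 1) <= ln u.
Proof.
move=> u1.
have key : hh 1 <= hh u.
  apply: (@ger0_derive1_ndecr _ hh 1 u) => //; last 1 first.
  - apply: derivable_within_continuous => z; rewrite in_itv /= => /andP[z1 _].
    have z0 : 0 < z by lra.
    by have [] := (@hh_der z z0).
  - move=> z; rewrite in_itv /= => /andP[z1 _].
    have z0 : 0 < z by lra.
    by have [] := (@hh_der z z0).
  - move=> z; rewrite in_itv /= => /andP[z1 _].
    have z0 : 0 < z by lra.
    rewrite derive1E; have [_ ->] := (@hh_der z z0).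
    have := (@ln_ge_1V z z0).
    have -> : (z + 1) / z = 1 + z^-1 by field; lra.
    lra.
move: key; rewrite /hh ln1 mulr0 !subrr mulr0 subr0.
have u0 : 0 < u + 1 by lra.
rewrite ler_pdivrMr // => h; lra.
Qed.

Lemma ln_step_bounds (k : R) : 0 < k ->
  (k + 1)^-1 <= ln ((k + 1) / k) /\ ln ((k + 1) / k) < k^-1 /\ 2 / (2 * k + 1) <= ln ((k + 1) / k).
Proof.
move=> k0.
have e : (k + 1) / k = 1 + k^-1 by field; lra.
have ki : 0 < k^-1 by rewrite invr_gt0.
have kk : k * k^-1 = 1 by rewrite divff //; lra.
split; last split.
- have h := (@ln_ge_1V ((k + 1) / k) ltac:(rewrite e; lra)).
  have -> : (k + 1)^-1 = 1 - ((k + 1) / k)^-1 by field; lra.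
  exact: h.
- rewrite e; exact: (@ln_lt_x k^-1 ki).
- have h := (@ln_lb ((k + 1) / k) ltac:(rewrite e; lra)).
  have -> : 2 / (2 * k + 1) = 2 * ((k + 1) / k - 1) / ((k + 1) / k + 1).
    by field; lra.
  exact: h.
Qed.
End L.


Section S.
Variable R : realType.

Definition AS (N M : nat) : R := \sum_(1 <= i < M.+1) ((N + i - 1)%:R)^-1.

Lemma AS_S N M : AS N M.+1 = AS N M + ((N + M)%:R)^-1.
Proof. by rewrite /AS big_nat_recr //= addnS subn1. Qed.

Lemma AS0 N : AS N 0 = 0.
Proof. by rewrite /AS big_geq. Qed.

Lemma ln_split (N M : nat) : (0 < N)%N ->
  ln ((N + M.+1)%:R / N%:R) = ln ((N + M)%:R / N%:R) + ln (((N + M)%:R + 1) / (N + M)%:R) :> R.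
Proof.
move=> N0.
have n0 : 0 < N%:R :> R by rewrite ltr0n.
have k0 : 0 < (N + M)%:R :> R by rewrite ltr0n; apply: leq_trans N0 (leq_addr _ _).
rewrite -lnM ?posrE ?divr_gt0 ?addr_gt0 //.
by congr ln; rewrite addnS -addn1 natrD; field; apply/andP; split; lra.
Qed.

Lemma AS_bounds N M : (0 < N)%N ->
  ln ((N + M)%:R / N%:R) <= AS N M /\
  AS N M <= ln ((N + M)%:R / N%:R) + (N%:R)^-1 - ((N + M)%:R)^-1 :> R.
Proof.
move=> N0.
have n0 : 0 < N%:R :> R by rewrite ltr0n.
elim: M => [|M [IH1 IH2]].
  rewrite AS0 addn0 divff ?ln1; last by apply: lt0r_neq0.
  by split; lra.
have k0 : 0 < (N + M)%:R :> R by rewrite ltr0n; apply: leq_trans N0 (leq_addr _ _).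
have [b1 [b2 _]] := @ln_step_bounds R _ k0.
have e : (N + M.+1)%:R = (N + M)%:R + 1 :> R by rewrite addnS -addn1 natrD.
rewrite AS_S ln_split // e.
have : 0 < ((N + M)%:R + 1)^-1 :> R by rewrite invr_gt0; lra.
split; lra.
Qed.

Lemma AS_strict N M : (0 < N)%N -> (0 < M)%N ->
  ln ((N + M)%:R / N%:R) < AS N M :> R.
Proof.
move=> N0; case: M => // M _.
have k0 : 0 < (N + M)%:R :> R by rewrite ltr0n; apply: leq_trans N0 (leq_addr _ _).
have [b1 [b2 _]] := @ln_step_bounds R _ k0.
have [h _] := @AS_bounds N M N0.
rewrite AS_S ln_split //; lra.
Qed.
End S.


Section K.
Variable R : realType.

Lemma ln2_gt0 : 0 < ln (2 : R).
Proof. by apply: ln_gt0; lra. Qed.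

Lemma ln_pow2 (k : nat) : ln ((2 ^ k)%:R : R) = k%:R * ln 2.
Proof. by rewrite natrX lnXn ?mulr_natl //; lra. Qed.

Lemma kappa_facts (S : finType) (Ns : S -> nat) (s : S) :
  (0 < Ns s)%N -> (Ns s < Ntot Ns)%N ->
  (0 < kappa R Ns s)%N /\ (Ntot Ns <= 2 ^ kappa R Ns s * Ns s)%N /\
  (2 ^ kappa R Ns s * Ns s < 2 * Ntot Ns)%N.
Proof.
move=> h0 h1.
set N := Ntot Ns; set n := Ns s.
have n0 : 0 < n%:R :> R by rewrite ltr0n.
have N0 : 0 < N%:R :> R by rewrite ltr0n (leq_trans h0) // ltnW.
have L0 := ln2_gt0.
set y := lg (N%:R / n%:R : R).
have y0 : 0 < y.
  rewrite /y /lg divr_gt0 // ln_gt0 // ltr_pdivlMr // mul1r ltr_nat //.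
have /andP[c1 c2] := ceil_itv y.
have cp : (0 < Num.ceil y)%R by rewrite ceil_gt0.
have kE : (kappa R Ns s)%:R = (Num.ceil y)%:~R :> R.
  by rewrite /kappa -/N -/y natr_absz gtr0_norm.
have k0 : (0 < kappa R Ns s)%N by rewrite /kappa absz_gt0 gt_eqF.
rewrite -kE in c2; rewrite intrB -kE /= in c1.
split => //.
move: c1 c2; rewrite /y /lg ler_pdivrMr // ltr_pdivlMr // => c1 c2.
split.
- have : ln (N%:R / n%:R) <= ln ((2 ^ kappa R Ns s)%:R : R).
    by rewrite ln_pow2.
  have N0' : (0 < N)%N by rewrite -(ltr0n R).
  rewrite ler_ln ?posrE ?divr_gt0 ?ltr0n ?expn_gt0 // ?ler_pdivrMr //.
  by rewrite -natrM ler_nat.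
- have N0' : (0 < N)%N by rewrite -(ltr0n R).
  move: c1; rewrite (_ : 1%:~R = 1) //; case: (kappa R Ns s) k0 => // k _.
  have -> : (k.+1%:R - 1 : R) = k%:R by rewrite -addn1 natrD addrK.
  rewrite -ln_pow2 ltr_ln ?posrE ?divr_gt0 ?ltr0n ?expn_gt0 // ltr_pdivlMr //.
  rewrite -natrM ltr_nat expnS -mulnA => h.
  by rewrite ltn_pmul2l.
Qed.
End K.


Section P.
Variable R : realType.

Lemma thetaE N : theta R N = (AS R N N)^-1.
Proof. by []. Qed.

Lemma ASNN_facts N : (0 < N)%N ->
  ln 2 < AS R N N /\ AS R N N <= ln 2 + (2 * N%:R)^-1.
Proof.
move=> N0.
have n0 : 0 < N%:R :> R by rewrite ltr0n.
have e : (N + N)%:R / N%:R = 2 :> R by rewrite natrD; field; lra.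
have := @AS_strict R N N N0 N0; have [_ h] := @AS_bounds R N N N0.
rewrite e in h * => h2; split => //.
apply: le_trans h _; rewrite natrD.
have h3 : N%:R^-1 - (N%:R + N%:R)^-1 = (2 * N%:R)^-1 :> R by field; lra.
lra.




Qed.

Lemma sumQo_split N M : (M <= N)%N ->
  \sum_(1 <= i < N.+1) (if (i <= M)%N then Qo R N i else 0) = theta R N * AS R N M.
Proof.
move=> MN.
rewrite (@big_cat_nat _ _ _ M.+1) //=.
have -> : \sum_(M.+1 <= i < N.+1) (if (i <= M)%N then Qo R N i else 0) = 0.
  rewrite big_nat_cond big1 // => i /andP[/andP[Hi _] _].
  by rewrite leqNgt Hi.
rewrite addr0.
rewrite /AS mulr_sumr; apply: eq_big_nat => i /andP[_ Hi].
by rewrite ltnS in Hi; rewrite Hi.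
Qed.

Lemma sumQo N : (0 < N)%N -> \sum_(1 <= i < N.+1) Qo R N i = 1.
Proof.
move=> N0; have [h _] := @ASNN_facts N N0.
have := @sumQo_split N N (leqnn N).
have -> : \sum_(1 <= i < N.+1) (if (i <= N)%N then Qo R N i else 0) =
   \sum_(1 <= i < N.+1) Qo R N i.
  by apply: eq_big_nat => i /andP[_ Hi]; rewrite ltnS in Hi; rewrite Hi.
move=> ->; rewrite thetaE mulVf //; apply: lt0r_neq0.
by apply: lt_trans h; exact: ln2_gt0.
Qed.
End P.


Section Q.
Variable R : realType.

Lemma final_ineq (L a b t d : R) : 0 < L -> L < a -> a <= L + d -> 0 <= t -> t <= L ->
  t <= b -> t / L < a^-1 * b + L^-1 * d.
Proof.
move=> L0 La ad t0 tL tb.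
have a0 : 0 < a by lra.
have u0 : 0 < L^-1 by rewrite invr_gt0.
have v0 : 0 < a^-1 by rewrite invr_gt0.
have vu : a^-1 < L^-1 by rewrite ltf_pV2 ?posrE.
have e1 : L^-1 - a^-1 = (a - L) * (L^-1 * a^-1) by field; apply/andP; split; lra.
have e2 : L * L^-1 = 1 by rewrite divff //; lra.
have h1 : a^-1 * t <= a^-1 * b by rewrite ler_pM2l.
have h2 : t * (a - L) <= L * d by nra.
have h3 : t * (a - L) * (L^-1 * a^-1) <= L * d * (L^-1 * a^-1).
  by rewrite ler_pM2r // mulr_gt0.
have h4 : L * d * (L^-1 * a^-1) = d * a^-1 by field; apply/andP; split; lra.
have d0 : 0 < d by lra.
have h5 : d * a^-1 < d * L^-1 by rewrite ltr_pM2l.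
have h6 : t / L - a^-1 * t = t * (a - L) * (L^-1 * a^-1) by rewrite -mulrA -e1; ring.
lra.
Qed.

Lemma aux_eq (z a b : R) : 0 < a -> 0 < b -> z = z * b / a * (a / b).
Proof. by move=> a0 b0; field; apply/andP; split; lra. Qed.

Lemma aux2 (a L t : R) : 0 < L -> (a * L - t) / L = a - t / L.
Proof. by move=> L0; field; lra. Qed.

Lemma aux3 (L x : R) : 1 / L / x = L^-1 * x^-1.
Proof. by rewrite mul1r. Qed.

Lemma per_s (S : finType) (Ns : S -> nat) (s : S) :
  (0 < Ns s)%N -> (Ns s < Ntot Ns)%N ->
  \sum_(1 <= i < (Ntot Ns).+1) Qo R (Ntot Ns) i * (ell R Ns s i)%:R <
  lg ((Ntot Ns)%:R / (Ns s)%:R : R) + lg (expR (1 : R)) / (2 * (Ntot Ns)%:R).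
Proof.
move=> h0 h1.
have [k0 [hk1 hk2]] := @kappa_facts R S Ns s h0 h1.
rewrite /ell.
set N := Ntot Ns in h1 hk1 hk2 *; set n := Ns s in h0 h1 hk1 hk2 *.
set k := kappa R Ns s in k0 hk1 hk2 *.
set P := (2 ^ k * n)%N in hk1 hk2 *.
set M := (P - N)%N.
have N0 : (0 < N)%N by rewrite /N; lia.
have MN : (M <= N)%N by rewrite /M; lia.
have NM : (N + M)%N = P by rewrite /M; lia.
have E : \sum_(1 <= i < N.+1) Qo R N i * (if (i <= M)%N then k.-1 else k)%:R =
   k%:R * \sum_(1 <= i < N.+1) Qo R N i -
   \sum_(1 <= i < N.+1) (if (i <= M)%N then Qo R N i else 0).
  rewrite mulr_sumr -sumrB; apply: eq_bigr => i _.
  case: ifP => _; last by rewrite subr0 mulrC.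
  by rewrite -subn1 natrB // mulrBr mulr1 mulrC.
rewrite E sumQo_split // sumQo // mulr1 thetaE.
have [La aL] := @ASNN_facts R N N0.
have n0 : 0 < n%:R :> R by rewrite ltr0n.
have Nr0 : 0 < N%:R :> R by rewrite ltr0n.
have L0 := @ln2_gt0 R.
set t := ln ((N + M)%:R / N%:R : R).
have [tb _] := @AS_bounds R N M N0.
have t0 : 0 <= t by apply: ln_ge0; rewrite ler_pdivlMr // mul1r ler_nat leq_addr.
have tL : t <= ln 2.
  rewrite /t ler_ln ?posrE ?divr_gt0 ?ltr0n //; last by rewrite addn_gt0 N0.
  by rewrite ler_pdivrMr // -natrM ler_nat; lia.
have lnE : ln (N%:R / n%:R) = k%:R * ln 2 - t.
  rewrite -ln_pow2 /t.
  have -> : ((2 ^ k)%:R : R) = (N + M)%:R / N%:R * (N%:R / n%:R).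
    rewrite NM /P natrM; apply: aux_eq; lra.
  rewrite [ln (_ * (_ / _))]lnM ?posrE ?divr_gt0 ?ltr0n ?addn_gt0 ?N0 //; lra.
clear E.
have := @final_ineq (ln 2) (AS R N N) (AS R N M) t (2 * N%:R)^-1 L0 La aL t0 tL tb.
rewrite /lg lnE (@expRK R 1).

rewrite aux2; last lra.
rewrite aux3; lra.
Qed.
End Q.


Section T.
Variable R : realType.

Lemma part1_real (L a m x l : R) : 0 < L -> L < a -> 2 <= x -> x <= m ->
  2 / (2 * m + 1) <= l -> a^-1 / m < l / L + 1 / L / (2 * x ^+ 2).
Proof.
move=> L0 La x2 xm hl.
have m0 : 0 < m by lra.
have a0 : 0 < a by lra.
have u0 : 0 < L^-1 by rewrite invr_gt0.
have vu : a^-1 < L^-1 by rewrite ltf_pV2 ?posrE.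
have mi : 0 < m^-1 by rewrite invr_gt0.
have h1 : a^-1 / m < L^-1 / m by rewrite ltr_pM2r.
have e : m^-1 - 2 / (2 * m + 1) = (m * (2 * m + 1))^-1 by field; apply/andP; split; lra.
have h2 : (m * (2 * m + 1))^-1 <= (2 * x ^+ 2)^-1.
  rewrite lef_pV2 ?posrE; [nra| nra| nra].
have h3 : m^-1 <= l + (2 * x ^+ 2)^-1 by lra.
have h4 : L^-1 * m^-1 <= L^-1 * (l + (2 * x ^+ 2)^-1) by rewrite ler_pM2l.
have -> : l / L + 1 / L / (2 * x ^+ 2) = L^-1 * (l + (2 * x ^+ 2)^-1).
  by rewrite mul1r mulrDr mulrC.
rewrite mulrC in h4; lra.
Qed.

Lemma part1 (N i : nat) : (2 <= N)%N -> (1 <= i <= N)%N ->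
  Qo R N i < Qstar R N i + lg (expR (1 : R)) / (2 * N%:R ^+ 2).
Proof.
move=> N2 /andP[i1 iN].
have N0 : (0 < N)%N by lia.
have [La _] := @ASNN_facts R N N0.
have L0 := @ln2_gt0 R.
have em : (N + i)%:R = (N + i - 1)%:R + 1 :> R.
  by rewrite {1}(_ : (N + i = (N + i - 1) + 1)%N) ?natrD //; lia.
have m0 : 0 < (N + i - 1)%:R :> R by rewrite ltr0n; lia.
have [_ [_ b3]] := @ln_step_bounds R _ m0.
rewrite /Qo /Qstar /lg thetaE em (@expRK R 1).
apply: part1_real => //.
- by rewrite (ler_nat R 2 N).
- by rewrite ler_nat; lia.
Qed.
End T.


Lemma Ns_lt (S : finType) (Ns : S -> nat) (hS : (2 <= #|S|)%N)
  (hNs : forall s, (0 < Ns s)%N) s : (Ns s < Ntot Ns)%N.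
Proof.
rewrite /Ntot (bigD1 s) //= -[X in (X < _)%N]addn0 ltn_add2l.
apply: (@leq_trans (\sum_(t | t != s) 1)%N).
  by rewrite sum1_card cardC1; lia.
by apply: leq_sum => t _; exact: hNs.
Qed.

Lemma HE (R : realType) (S : finType) (p : S -> R) (Ns : S -> nat)
  (hp : forall s, 0 < p s) (hNs : forall s, (0 < Ns s)%N) (hN : (0 < Ntot Ns)%N) :
  entropy p + relent p (qdist R Ns) =
  \sum_(s : S) p s * lg ((Ntot Ns)%:R / (Ns s)%:R).
Proof.
rewrite /entropy /relent -sumrN -big_split; apply: eq_bigr => s _ /=.
have ps := hp s.
have n0 : 0 < (Ns s)%:R :> R by rewrite ltr0n.
have N0 : 0 < (Ntot Ns)%:R :> R by rewrite ltr0n.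
rewrite /lg /qdist !ln_div ?posrE ?divr_gt0 //.
ring.
Qed.

Theorem lemma3 (R : realType) (S : finType) (p : S -> R) (Ns : S -> nat)
  (hS : (2 <= #|S|)%N)
  (hp : forall s, 0 < p s)
  (hp1 : \sum_(s : S) p s = 1)
  (hNs : forall s, (0 < Ns s)%N)
  (hN : (2 <= Ntot Ns)%N) :
  (forall i : nat, (1 <= i <= Ntot Ns)%N ->
     Qo R (Ntot Ns) i < Qstar R (Ntot Ns) i
                        + lg (expR 1) / (2 * (Ntot Ns)%:R ^+ 2)) /\
  avg_len p Ns (Qo R (Ntot Ns)) <
    entropy p + relent p (qdist R Ns) + lg (expR 1) / (2 * (Ntot Ns)%:R).
Proof.
split; first by move=> i hi; exact: part1.
rewrite HE //; last by lia.
set c := lg (expR 1) / (2 * (Ntot Ns)%:R).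
have -> : c = \sum_(s : S) p s * c by rewrite -mulr_suml hp1 mul1r.
rewrite -big_split /avg_len.
have [s0 _] : exists s0 : S, true.
  case: (pickP (fun _ : S => true)) => [s0 _|h]; first by exists s0.
  by move: hS; rewrite (eq_card0 h).
have lt s : p s * \sum_(1 <= i < (Ntot Ns).+1) Qo R (Ntot Ns) i * (ell R Ns s i)%:R <
    p s * lg ((Ntot Ns)%:R / (Ns s)%:R) + p s * c.
  by rewrite -mulrDr ltr_pM2l //; apply: per_s => //; exact: Ns_lt.
rewrite (bigD1 s0) //= [X in _ < X](bigD1 s0) //=.
apply: ltr_leD; first exact: lt.
by apply: ler_sum => s _; apply: ltW; exact: lt.
Qed.
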